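(* Let $p$ be a prime and $b$ an integer with $0<b<p$. If $(p-b)(p-b^{-1})=pk+1$ for some integer $k>1$, then $|\mathrm{inv}_{1,b}|>4$.
   Context: Let $S=\mathbb{C}[x_1,x_2]$, $\zeta=e^{2\pi i/p}$, $G=\mathbb{Z}/p\mathbb{Z}=\langle\zeta\rangle$ acting on $S$ by $x_1\mapsto\zeta x_1$, $x_2\mapsto\zeta^bx_2$, with invariant ring $S^G_{1,b}$ (spanned by monomials $x_1^cx_2^d$ with $c+bd\equiv0\pmod p$). $\mathrm{inv}_{1,b}$ denotes the minimal set of monomial generators of $S^G_{1,b}$ as a $\mathbb{C}$-algebra: the nonconstant invariant monomials that are not a product of two nonconstant invariant monomials. $b^{-1}$ is the unique integer $0<b^{-1}<p$ with $bb^{-1}\equiv1\pmod p$. *)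

(* Defs.v *)
From mathcomp Require Import all_boot.
Set Implicit Arguments. Unset Strict Implicit. Unset Printing Implicit Defensive.

(* A monomial x1^c x2^d of S = C[x1,x2] is encoded by its exponent pair (c, d).
   The generator zeta = e^{2 pi i/p} of G = Z/pZ acts by x1 |-> zeta x1,
   x2 |-> zeta^b x2, hence sends x1^c x2^d to zeta^(c + b d) x1^c x2^d; so the
   monomial is invariant iff c + b d = 0 (mod p). *)
Definition invariant_mono (p b : nat) (m : nat * nat) : Prop :=
  (p %| m.1 + b * m.2)%N.

Definition nonconst_mono (m : nat * nat) : Prop := m <> (0%N, 0%N).

Definition mono_mul (m1 m2 : nat * nat) : nat * nat :=
  ((m1.1 + m2.1)%N, (m1.2 + m2.2)%N).

Definition in_inv (p b : nat) (m : nat * nat) : Prop :=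
  [/\ nonconst_mono m, invariant_mono p b m &
      ~ exists m1 m2, [/\ nonconst_mono m1, invariant_mono p b m1,
                          nonconst_mono m2, invariant_mono p b m2 &
                          m = mono_mul m1 m2]].

(* Main.v *)
Require Import Defs.
From mathcomp Require Import all_boot.
From mathcomp Require Import zify.

Lemma dvd_b (p b d : nat) : prime p -> (0 < b < p)%N -> (p %| b * d)%N -> (p %| d)%N.
Proof. move=> pp /andP[b0 bp]; by rewrite Euclid_dvdM // (gtnNdvd b0 bp). Qed.

Lemma dvd_small (p x : nat) : (p %| x)%N -> (x < p)%N -> x = 0%N.
Proof.
case: x => // x H lt; have := dvdn_leq (isT : (0 < x.+1)%N) H; lia.
Qed.

Lemma decomp p b m m1 m2 :
  nonconst_mono m1 -> invariant_mono p b m1 -> nonconst_mono m2 -> invariant_mono p b m2 ->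
  m = mono_mul m1 m2 ->
  exists c1 d1 c2 d2, [/\ (c1, d1) <> (0, 0), (p %| c1 + b * d1), (c2, d2) <> (0, 0),
     (p %| c2 + b * d2) & (m.1 = c1 + c2 /\ m.2 = d1 + d2)]%N.
Proof.
case: m1 m2 => c1 d1 [c2 d2] H1 H2 H3 H4 ->.
by exists c1, d1, c2, d2.
Qed.

Lemma nz (c d : nat) : (c, d) <> (0%N, 0%N) -> (0 < c + d)%N.
Proof. by case: c d => [|c] [|d]. Qed.

Lemma keylem p a t d1 c1 : (0 < d1)%N -> (a * d1 < p)%N ->
  (c1 + p * d1 = t * p + a * d1)%N -> (a <= c1)%N.
Proof. move=> h1 h2 h3.
case: (ltnP t d1) => ht.
- have : (t * p <= (d1 - 1) * p)%N by rewrite leq_mul2r; lia. nia.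
- have : (d1 * p <= t * p)%N by rewrite leq_mul2r ht orbT. nia.
Qed.

Lemma ha1lem p b binv m : (0 < b < p)%N -> (0 < binv < p)%N ->
  (b * binv = m * p + 1)%N -> (1 + b * (p - binv) = (b - m) * p)%N.
Proof. move=> H1 H2 E.
have : (m * p < b * p)%N by rewrite ltn_mul2r; nia.
nia. Qed.

Lemma hnelem p a r q binv k : (a * q + r = p)%N -> (a - r = 1)%N -> (q.+1 = p - binv)%N ->
  (a * (p - binv) = p * k + 1)%N -> (r < a)%N -> (1 < k)%N -> False.
Proof. move=> Hq e1 e2 E ra k1.
have : (a * (p - binv) = p + 1)%N by rewrite -e2 mulnS; lia.
rewrite E => h. have : (p * k = p * 1)%N by lia.
move/eqP; rewrite eqn_mul2l; case/orP => /eqP; lia.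
Qed.

Ltac slia := repeat match goal with
  | H : is_true (dvdn _ _) |- _ => clear H
  | H : (_ = _ %[mod _])%N |- _ => clear H
  | H : is_true (prime _) |- _ => clear H
  end; lia.

Theorem proposition3p16 (p b binv k : nat) :
  prime p -> (0 < b < p)%N ->
  (0 < binv < p)%N -> (b * binv = 1 %[mod p])%N ->
  (1 < k)%N -> ((p - b) * (p - binv) = p * k + 1)%N ->
  exists s : seq (nat * nat),
    [/\ uniq s, (4 < size s)%N & forall m, m \in s -> in_inv p b m].
Proof.
move=> pp Hb Hbi Hmod Hk E.
have p1 : (1 < p)%N by apply: prime_gt1.
have Hb' := Hb; move/andP: Hb' => [b0 bp].
set a := (p - b)%N.
have a2 : (2 <= a)%N.
  case: (leqP 2 a) => // a1.
  have : (a * (p - binv) <= 1 * (p - binv))%N by rewrite leq_mul2r; lia.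
  rewrite E; nia.
have ap : (a < p)%N by lia.
set r := (p %% a)%N.
have r0 : (0 < r)%N.
  rewrite lt0n; apply/negP => /eqP Hr.
  have : (a %| p)%N by apply/dvdnP; exists (p %/ a)%N; rewrite {1}(divn_eq p a) -/r Hr addn0.
  case/primeP: (pp) => _ Hd; move/Hd; lia.
have ra : (r < a)%N by rewrite ltn_mod; lia.
have Hq : (a * (p %/ a) + r = p)%N by rewrite mulnC -divn_eq.
set q := (p %/ a)%N.
have q1 : (1 <= q)%N by rewrite divn_gt0; lia.
have Ha1 : (p %| 1 + b * (p - binv))%N.
  have Em : (b * binv = (b * binv %/ p) * p + 1)%N.
    by rewrite {1}(divn_eq (b * binv) p) Hmod modn_small.
  by apply/dvdnP; exists (b - (b * binv %/ p))%N; apply: ha1lem.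
have Hne : (a - r, q.+1) != (1%N, p - binv).
  rewrite xpair_eqE; apply/negP => /andP[/eqP e1 /eqP e2].
  exact: (hnelem _ _ _ _ _ _ Hq e1 e2 E ra Hk).
exists [:: (p, 0%N); (0%N, p); (a, 1%N); (1%N, p - binv); (a - r, q.+1)].
split.
- rewrite /= !inE !xpair_eqE; rewrite xpair_eqE in Hne.
  clear -Hne a2 ap ra r0 q1 p1 Hbi; lia.
- by [].
move=> m /[!inE] /orP[/eqP->|/orP[/eqP->|/orP[/eqP->|/orP[/eqP->|/eqP->]]]];
  (split; [rewrite /nonconst_mono; case => /eqP; slia | rewrite /invariant_mono /= | ]);
  try (case=> m1 [m2 [H1 H2 H3 H4 H5]];
  have [c1 [d1 [c2 [d2 [/nz N1 D1 /nz N2 D2 [/= e1 e2]]]]]] := decomp _ _ _ _ _ H1 H2 H3 H4 H5).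
- by rewrite muln0 addn0 dvdnn.
- have d10 : d1 = 0%N by slia.
  have d20 : d2 = 0%N by slia.
  move: D1 D2; rewrite d10 d20 !muln0 !addn0 => D1 D2.
  have h1 : (p <= c1)%N by apply: dvdn_leq => //; slia.
  have h2 : (p <= c2)%N by apply: dvdn_leq => //; slia.
  slia.
- by rewrite dvdn_mull.
- have c10 : c1 = 0%N by slia.
  have c20 : c2 = 0%N by slia.
  move: D1 D2; rewrite c10 c20 !add0n => /(dvd_b _ _ _ pp Hb) D1 /(dvd_b _ _ _ pp Hb) D2.
  have h1 : (p <= d1)%N by apply: dvdn_leq => //; slia.
  have h2 : (p <= d2)%N by apply: dvdn_leq => //; slia.
  slia.
- by rewrite muln1 subnK // ltnW.
- case: d1 e2 D1 N1 => [|d1] e2 D1 N1.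
  + rewrite muln0 addn0 in D1; have := dvd_small _ _ D1; slia.
  + have d20 : d2 = 0%N by slia.
    rewrite d20 muln0 addn0 in D2; have := dvd_small _ _ D2; slia.
- by [].
- case: c1 e1 D1 N1 => [|c1] e1 D1 N1.
  + rewrite add0n in D1; have := dvd_small _ _ (dvd_b _ _ _ pp Hb D1); slia.
  + have c20 : c2 = 0%N by slia.
    rewrite c20 add0n in D2; have := dvd_small _ _ (dvd_b _ _ _ pp Hb D2); slia.
- apply/dvdnP; exists q.
  have pab : (a + b = p)%N by rewrite /a subnK // ltnW.
  have h1 : (q * p = a * q + b * q)%N by rewrite mulnC -{1}pab mulnDl.
  rewrite mulnS h1; slia.
- have d1p : (0 < d1)%N.
    case: d1 e2 D1 N1 => [|d1] // e2 D1 N1.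
    rewrite muln0 addn0 in D1; have := dvd_small _ _ D1; slia.
  have d2p : (0 < d2)%N.
    case: d2 e2 D2 N2 => [|d2] // e2 D2 N2.
    rewrite muln0 addn0 in D2; have := dvd_small _ _ D2; slia.
  case/dvdnP: D1 => t Ht.
  have ad1 : (a * d1 < p)%N.
    have : (a * d1 <= a * q)%N by rewrite leq_mul2l; apply/orP; right; slia.
    slia.
  have pab : (p * d1 = a * d1 + b * d1)%N by rewrite -mulnDl /a subnK // ltnW.
  have Hk2 : (c1 + p * d1 = t * p + a * d1)%N by slia.
  have := keylem p a t d1 c1 d1p ad1 Hk2.
  slia.
Qed.
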